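(* Let $F$ be the class of functions computed by scalar-output $\ell_\infty$-dist nets with input dimension $d$, width $w\ge d$ and depth (number of hidden layers) $L$, with all parameters ranging over the reals. Then the VC dimension of $F$ satisfies $\mathrm{VCdim}(F)=\tilde O(L^2w^4)$.
   Context: An $\ell_\infty$-dist net takes $\mathbf x^{(0)}=\mathbf x\in\mathbb{R}^d$ and computes, for each layer $l$ and unit $k$, $x^{(l)}_k=\|\mathbf x^{(l-1)}-\mathbf w^{(l,k)}\|_\infty+b^{(l,k)}$ with real parameters $\mathbf w^{(l,k)}$, $b^{(l,k)}$; the width is the maximum number of units per layer. The VC dimension of a real-valued class is that of the associated sign classifiers $\mathbf x\mapsto\mathrm{sign}(g(\mathbf x))$. $\tilde O(\cdot)$ hides absolute constants and polylogarithmic factors. *)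

(* Defs.v *)
From Stdlib Require Import Reals List Arith.
Import ListNotations.
Open Scope R_scope.

(* A vector of R^n is a list of length n. *)
Fixpoint linf (x w : list R) : R :=
  match x, w with
  | a :: x', c :: w' => Rmax (Rabs (a - c)) (linf x' w')
  | _, _ => 0
  end.

(* A unit is a pair (weight vector w, bias b); it computes ||x - w||_inf + b. *)
Definition unit_t : Type := (list R * R)%type.
Definition layer : Type := list unit_t.

Definition eval_unit (u : unit_t) (x : list R) : R := linf x (fst u) + snd u.
Definition eval_layer (ly : layer) (x : list R) : list R :=
  map (fun u => eval_unit u x) ly.

(* A net is the list of its layers: the L hidden layers followed by the output layer. *)
Definition net : Type := list layer.
Fixpoint eval_net (N : net) (x : list R) : list R :=
  match N with
  | [] => x
  | ly :: N' => eval_net N' (eval_layer ly x)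
  end.

Definition net_out (N : net) (x : list R) : R := hd 0 (eval_net N x).

Fixpoint dims_ok (n : nat) (N : net) : Prop :=
  match N with
  | [] => n = 1%nat
  | ly :: N' => (forall u, In u ly -> length (fst u) = n) /\ dims_ok (length ly) N'
  end.

Definition arch_ok (d w L : nat) (N : net) : Prop :=
  dims_ok d N /\ length N = S L /\ Forall (fun ly => (length ly <= w)%nat) N.

Definition shattered (d w L : nat) (pts : list (list R)) : Prop :=
  NoDup pts /\ Forall (fun x => length x = d) pts /\
  forall lab : list R -> bool,
    exists N, arch_ok d w L N /\
      forall x, In x pts -> (0 <= net_out N x <-> lab x = true).

(* Main.v *)
Require Import Defs.
From Stdlib Require Import Reals List Arith Lra Lia IndefiniteDescription.
Import ListNotations.
Open Scope R_scope.
Fixpoint dot (a x : list R) : R :=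
  match a, x with a0 :: a', x0 :: x' => a0 * x0 + dot a' x' | _, _ => 0 end.

Definition aff : Type := (list R * R)%type.
Definition aeval (f : aff) (th : list R) : R := dot (fst f) th + snd f.
Definition sgn (r : R) : bool := if Rle_dec 0 r then true else false.
Definition pat (fs : list aff) (th : list R) : list bool := map (fun f => sgn (aeval f th)) fs.

Fixpoint comb (t : R) (x y : list R) : list R :=
  match x, y with a :: x', b :: y' => ((1 - t) * a + t * b) :: comb t x' y' | _, _ => [] end.

Lemma comb_len t x y : length x = length y -> length (comb t x y) = length x.
Proof. revert y; induction x as [|a x IH]; intros [|b y] H; simpl in *; try lia.
  f_equal; apply IH; lia. Qed.

Lemma dot_comb t a x y : length x = length y ->
  dot a (comb t x y) = (1 - t) * dot a x + t * dot a y.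
Proof. revert a y; induction x as [|u x IH]; intros a0 [|v y] H; destruct a0 as [|c a0]; simpl in *; try lia; try ring.
  rewrite IH by lia. ring. Qed.

Lemma aeval_comb t f x y : length x = length y ->
  aeval f (comb t x y) = (1 - t) * aeval f x + t * aeval f y.
Proof. intros H; unfold aeval; rewrite dot_comb by auto; ring. Qed.

Fixpoint g (h p : nat) : nat :=
  match h, p with
  | O, _ => 1%nat
  | S _, O => 1%nat
  | S h', S p' => (g h' (S p') + g h' p')%nat
  end.

Fixpoint subsc (b : list R) (k : R) (a : list R) : list R :=
  match b, a with b0 :: b', a0 :: a' => (b0 - k * a0) :: subsc b' k a' | _, _ => [] end.

Lemma subsc_len b k a : length b = length a -> length (subsc b k a) = length b.
Proof. revert a; induction b as [|b0 b IHb]; intros [|c a] H; simpl in *; try lia. f_equal; apply IHb; lia. Qed.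

Lemma dot_subsc b k a th : length b = length a -> length a = length th ->
  dot (subsc b k a) th = dot b th - k * dot a th.
Proof. revert a th; induction b as [|b0 b IHb]; intros [|c a] [|x th] H1 H2; simpl in *; try lia; try ring.
  rewrite IHb by lia. ring. Qed.

Lemma elim P (a : list R) (c : R) : length a = S P -> (exists x, In x a /\ x <> 0) ->
  exists Tr : aff -> aff,
    (forall h, length (fst h) = S P -> length (fst (Tr h)) = P) /\
    forall th, length th = S P -> dot a th + c = 0 ->
      exists th', length th' = P /\ forall h, length (fst h) = S P -> aeval h th = aeval (Tr h) th'.
Proof.
  revert a c; induction P as [|P IH]; intros a c Ha Hnz.
  - destruct a as [|a0 [|? ?]]; simpl in Ha; try lia.
    destruct Hnz as [x [[Ex|[]] Hx]]. subst x. rename a0 into x.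
    exists (fun h => ([], snd h - (hd 0 (fst h)) / x * c)). split.
    + intros; reflexivity.
    + intros [|t0 [|? ?]] Ht Hd; simpl in Ht; try lia. exists []. split; [reflexivity|].
      intros [[|b0 [|? ?]] d] Hl; simpl in Hl; try lia. unfold aeval; simpl in *.
      assert (t0 = - c / x) by (field_simplify_eq; lra || (apply Rmult_eq_reg_l with x; auto; field_simplify; lra)).
      subst t0. field. auto.
  - destruct a as [|a0 a']; simpl in Ha; [lia|].
    destruct (Req_dec a0 0) as [E|E].
    + assert (Hnz' : exists x, In x a' /\ x <> 0).
      { destruct Hnz as [x [[<-|Hin] Hx]]; [contradiction|eauto]. }
      destruct (IH a' c ltac:(lia) Hnz') as [Tr [HT1 HT2]].
      exists (fun h => match fst h with
                    | b0 :: b' => (b0 :: fst (Tr (b', snd h)), snd (Tr (b', snd h)))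
                    | [] => h end).
      split.
      * intros [[|b0 b'] d] Hl; simpl in *; [lia|]. f_equal. apply (HT1 (b', d)); simpl; lia.
      * intros [|x0 th] Ht Hd; simpl in Ht; [lia|]. simpl in Hd. subst a0.
        destruct (HT2 th ltac:(lia) ltac:(lra)) as [th' [Hl' Hev]].
        exists (x0 :: th'). split; [simpl; lia|].
        intros [[|b0 b'] d] Hl; simpl in Hl; [lia|].
        specialize (Hev (b', d) ltac:(simpl; lia)). unfold aeval in *; simpl in *. lra.
    + exists (fun h => match fst h with
                    | b0 :: b' => (subsc b' (b0 / a0) a', snd h - b0 / a0 * c)
                    | [] => h end).
      split.
      * intros [[|b0 b'] d] Hl; simpl in *; [lia|]. rewrite subsc_len; lia.
      * intros [|x0 th] Ht Hd; simpl in Ht; [lia|]. simpl in Hd.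
        exists th. split; [lia|].
        intros [[|b0 b'] d] Hl; simpl in Hl; [lia|]. unfold aeval; simpl.
        rewrite dot_subsc by lia.
        assert (x0 = - (dot a' th + c) / a0) by (field_simplify_eq; auto; lra).
        subst x0. field. auto.
Qed.

Lemma nodup_all_eq {A} (l : list A) s0 : NoDup l -> (forall s, In s l -> s = s0) -> (length l <= 1)%nat.
Proof.
  intros Hn Hs. destruct l as [|a [|b l]]; simpl; try lia.
  inversion Hn; subst. exfalso. apply H1. rewrite (Hs a), (Hs b); simpl; auto.
Qed.

Lemma pat_comb fs t th1 th2 P s : Forall (fun f => length (fst f) = P) fs ->
  length th1 = length th2 -> 0 <= t < 1 -> pat fs th1 = s -> pat fs th2 = s -> pat fs (comb t th1 th2) = s.
Proof.
  revert s; induction fs as [|f fs IH]; intros s HF Hl Ht H1 H2; simpl in *; [auto|].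
  subst s. inversion H2 as [[E1 E2]]. inversion HF; subst.
  f_equal; [|apply IH; auto]. rewrite aeval_comb by auto.
  unfold sgn in *. destruct (Rle_dec 0 (aeval f th1)), (Rle_dec 0 (aeval f th2)); try discriminate;
  destruct Rle_dec; auto; exfalso; nra.
Qed.

Lemma dot_zero_all a x : (forall y, In y a -> y = 0) -> dot a x = 0.
Proof. revert x; induction a as [|a0 a IH]; intros [|x0 x] H; simpl; auto.
  rewrite (H a0) by (left; auto). rewrite IH by (intros; apply H; right; auto). ring. Qed.

Lemma hyper_nz f th1 th2 : 0 <= aeval f th1 -> aeval f th2 < 0 -> exists x, In x (fst f) /\ x <> 0.
Proof.
  intros A1 A2.
  destruct (Classical_Prop.classic (exists x, In x (fst f) /\ x <> 0)) as [?|N]; auto. exfalso.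
  assert (dot (fst f) th1 = 0 /\ dot (fst f) th2 = 0) as [D1 D2].
  { split; apply dot_zero_all; intros y Hy; destruct (Req_dec y 0); auto; exfalso; apply N; eauto. }
  unfold aeval in *. lra.
Qed.

Lemma hyper f fs P th1 th2 s (Tr : aff -> aff) : Forall (fun h => length (fst h) = S P) (f :: fs) ->
  (forall th, length th = S P -> dot (fst f) th + snd f = 0 ->
      exists th', length th' = P /\ forall h, length (fst h) = S P -> aeval h th = aeval (Tr h) th') ->
  length th1 = S P -> length th2 = S P ->
  pat (f :: fs) th1 = true :: s -> pat (f :: fs) th2 = false :: s ->
  exists th, length th = P /\ pat (map Tr fs) th = s.
Proof.
  intros HF T2 H1 H2 E1 E2. simpl in E1, E2. injection E1 as S1 P1. injection E2 as S2 P2.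
  unfold sgn in S1, S2. destruct (Rle_dec 0 (aeval f th1)) as [A1|]; [|discriminate].
  destruct (Rle_dec 0 (aeval f th2)) as [|A2]; [discriminate|]. apply Rnot_le_lt in A2.
  pose proof (Forall_inv HF) as H3; pose proof (Forall_inv_tail HF) as H4. simpl in H3.
  set (e1 := aeval f th1) in *. set (e2 := aeval f th2) in *.
  set (t := e1 / (e1 - e2)).
  assert (Ht : 0 <= t < 1). { unfold t; split. apply Rle_mult_inv_pos; lra.
    apply Rmult_lt_reg_r with (e1 - e2); [lra|]. unfold Rdiv; rewrite Rmult_assoc, Rinv_l by lra. lra. }
  set (th := comb t th1 th2).
  assert (Hz : aeval f th = 0). { unfold th; rewrite aeval_comb by lia. fold e1 e2. unfold t. field. lra. }
  destruct (T2 th ltac:(unfold th; rewrite comb_len; lia) Hz) as [th' [L' Ev]].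
  exists th'. split; auto.
  assert (Hp : pat fs th = s) by (unfold th; apply pat_comb with (S P); auto; lia).
  rewrite <- Hp. unfold pat. rewrite map_map. apply map_ext_in. intros h Hh.
  rewrite Ev; auto. rewrite Forall_forall in H4; auto.
Qed.

Definition lbeq := list_eq_dec Bool.bool_dec.
Definition memb (s : list bool) (T : list (list bool)) : bool := if in_dec lbeq s T then true else false.

Lemma count H : forall fs P pats, length fs = H -> Forall (fun f => length (fst f) = P) fs ->
  NoDup pats -> (forall s, In s pats -> exists th, length th = P /\ pat fs th = s) ->
  (length pats <= g H P)%nat.
Proof.
  induction H as [|H IH]; intros fs P pats Hl HF Hn Hr.
  - destruct fs; [|discriminate]. destruct P; simpl;
    apply (nodup_all_eq _ []); auto; intros s Hs; destruct (Hr s Hs) as [th [_ <-]]; reflexivity.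
  - destruct fs as [|f fs]; [discriminate|]. simpl in Hl. injection Hl as Hl.
    destruct P as [|P].
    { simpl. apply (nodup_all_eq _ (pat (f :: fs) [])); auto. intros s Hs.
      destruct (Hr s Hs) as [th [Lt <-]]. destruct th; [reflexivity|discriminate]. }
    set (T := map (@tl bool) (filter (fun s => hd false s) pats)).
    set (F := map (@tl bool) (filter (fun s => negb (hd false s)) pats)).
    assert (LTF : length pats = (length T + length F)%nat).
    { unfold T, F. rewrite !length_map. symmetry. apply filter_length. }
    assert (HTin : forall s', In s' T -> exists th, length th = S P /\ pat (f :: fs) th = true :: s').
    { intros s' Hs'. unfold T in Hs'. apply in_map_iff in Hs' as [s [<- Hs]]. apply filter_In in Hs as [Hs Hh].
      destruct (Hr s Hs) as [th [Lt Pt]]. exists th; split; auto. rewrite Pt.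
      destruct s as [|b s]; [discriminate Pt|]. simpl in Hh; subst; reflexivity. }
    assert (HFin : forall s', In s' F -> exists th, length th = S P /\ pat (f :: fs) th = false :: s').
    { intros s' Hs'. unfold F in Hs'. apply in_map_iff in Hs' as [s [<- Hs]]. apply filter_In in Hs as [Hs Hh].
      destruct (Hr s Hs) as [th [Lt Pt]]. exists th; split; auto. rewrite Pt.
      destruct s as [|b s]; [discriminate Pt|]. destruct b; simpl in Hh; [discriminate|reflexivity]. }
    assert (NE : forall s, In s pats -> s <> []).
    { intros s Hs. destruct (Hr s Hs) as [th [_ <-]]. discriminate. }
    assert (NT : NoDup T).
    { unfold T. apply NoDup_map_NoDup_ForallPairs; [|apply NoDup_filter; auto].
      intros x y Hx Hy E. apply filter_In in Hx as [Hx Hhx]. apply filter_In in Hy as [Hy Hhy].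
      destruct x as [|bx x]; [destruct (NE _ Hx); auto|]. destruct y as [|by0 y]; [destruct (NE _ Hy); auto|].
      simpl in *. subst; reflexivity. }
    assert (NF : NoDup F).
    { unfold F. apply NoDup_map_NoDup_ForallPairs; [|apply NoDup_filter; auto].
      intros x y Hx Hy E. apply filter_In in Hx as [Hx Hhx]. apply filter_In in Hy as [Hy Hhy].
      destruct x as [|bx x]; [destruct (NE _ Hx); auto|]. destruct y as [|by0 y]; [destruct (NE _ Hy); auto|].
      simpl in *. destruct bx; destruct by0; try discriminate. subst; reflexivity. }
    set (I := filter (fun s => memb s T) F).
    set (D := filter (fun s => negb (memb s T)) F).
    assert (LF : length F = (length I + length D)%nat) by (symmetry; apply filter_length).
    assert (B1 : (length (T ++ D) <= g H (S P))%nat).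
    { apply (IH fs); auto.
      - apply Forall_inv_tail in HF; auto.
      - apply NoDup_app; auto. apply NoDup_filter; auto.
        intros a Ha Hd. unfold D in Hd. apply filter_In in Hd as [_ Hm]. unfold memb in Hm.
        destruct in_dec; [discriminate|contradiction].
      - intros s Hs. apply in_app_or in Hs as [Hs|Hs].
        + destruct (HTin s Hs) as [th [Lt Pt]]. exists th. split; auto. simpl in Pt. injection Pt; auto.
        + unfold D in Hs. apply filter_In in Hs as [Hs _].
          destruct (HFin s Hs) as [th [Lt Pt]]. exists th. split; auto. simpl in Pt. injection Pt; auto. }
    assert (B2 : (length I <= g H P)%nat).
    { destruct I as [|s0 I0] eqn:EI; [simpl; lia|].
      destruct (HTin s0) as [th1 [L1 P1]].
      { assert (In s0 I) by (rewrite EI; left; auto). unfold I in H0. apply filter_In in H0 as [_ Hm].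
        unfold memb in Hm; destruct in_dec; [auto|discriminate]. }
      destruct (HFin s0) as [th2 [L2 P2]].
      { assert (In s0 I) by (rewrite EI; left; auto). unfold I in H0. apply filter_In in H0 as [? _]; auto. }
      assert (Hnz : exists x, In x (fst f) /\ x <> 0).
      { simpl in P1, P2. injection P1 as S1 _. injection P2 as S2 _. unfold sgn in S1, S2.
        destruct (Rle_dec 0 (aeval f th1)) as [A1|]; [|discriminate].
        destruct (Rle_dec 0 (aeval f th2)) as [|A2]; [discriminate|]. apply Rnot_le_lt in A2.
        eapply hyper_nz; eauto. }
      pose proof (Forall_inv HF) as HF0. simpl in HF0.
      destruct (elim P (fst f) (snd f) HF0 Hnz) as [Tr [T1 T2]].
      rewrite <- EI. apply (IH (map Tr fs)).
      - rewrite length_map; auto.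
      - apply Forall_forall. intros h Hh. apply in_map_iff in Hh as [h0 [<- Hh0]].
        apply T1. pose proof (Forall_inv_tail HF) as HF1. rewrite Forall_forall in HF1. auto.
      - unfold I; apply NoDup_filter; auto.
      - intros s Hs. unfold I in Hs. apply filter_In in Hs as [HsF Hm].
        unfold memb in Hm; destruct in_dec as [HsT|]; [|discriminate].
        destruct (HTin s HsT) as [t1 [M1 Q1]]. destruct (HFin s HsF) as [t2 [M2 Q2]].
        exact (hyper f fs P t1 t2 s Tr HF T2 M1 M2 Q1 Q2). }
    rewrite length_app in B1. simpl. lia.
Qed.

Definition in3 (a : R) : Prop := a = -1 \/ a = 0 \/ a = 1.
Definition vec3 (P : nat) (u : list R) : Prop := length u = P /\ Forall in3 u.

Definition flat_unit (k : unit_t) : list R := fst k ++ [snd k].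
Definition flat_layer (ly : layer) : list R := flat_map flat_unit ly.
Definition flat_net (N : net) : list R := flat_map flat_layer N.

Lemma dot_app u1 u2 x1 x2 : length u1 = length x1 -> dot (u1 ++ u2) (x1 ++ x2) = dot u1 x1 + dot u2 x2.
Proof. revert x1; induction u1 as [|a u1 IH]; intros [|b x1] H; simpl in *; try lia; try ring.
  rewrite IH by lia. ring. Qed.

Lemma dot_repeat0 k x : dot (repeat 0 k) x = 0.
Proof. revert x; induction k; intros [|b x]; simpl; auto. rewrite IHk; ring. Qed.

Lemma vec3_app p q u v : vec3 p u -> vec3 q v -> vec3 (p + q) (u ++ v).
Proof. intros [H1 H2] [H3 H4]; split; [rewrite length_app; lia|apply Forall_app; auto]. Qed.

Lemma vec3_repeat k : vec3 k (repeat 0 k).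
Proof. split; [apply repeat_length|]. apply Forall_forall; intros x Hx. apply repeat_spec in Hx. right; left; auto. Qed.

Lemma unit_form w1 w2 b1 b2 i al be : length w1 = length w2 -> in3 al -> in3 be ->
  exists u, vec3 (S (length w1)) u /\ dot u (w1 ++ [b1]) = al * nth i w1 0 + be * b1
     /\ dot u (w2 ++ [b2]) = al * nth i w2 0 + be * b2.
Proof.
  revert w2 i al; induction w1 as [|a w1 IH]; intros [|c w2] i al Hl Ha Hb; simpl in Hl; try lia.
  - exists [be]. split; [split; [reflexivity|constructor; auto]|]. simpl. destruct i; simpl; split; ring.
  - destruct i as [|i].
    + destruct (IH w2 0%nat 0 ltac:(lia) ltac:(right; left; auto) Hb) as [u [Hu [E1 E2]]].
      exists (al :: u). split; [destruct Hu; split; [simpl; lia|constructor; auto]|].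
      simpl. rewrite E1, E2. split; ring.
    + destruct (IH w2 i al ltac:(lia) Ha Hb) as [u [Hu [E1 E2]]].
      exists (0 :: u). split; [destruct Hu; split; [simpl; lia|constructor; auto; right; left; auto]|].
      simpl. rewrite E1, E2. split; ring.
Qed.

Lemma flat_layer_len ly n : (forall k, In k ly -> length (fst k) = n) -> length (flat_layer ly) = (length ly * S n)%nat.
Proof. induction ly as [|k ly IH]; intros H; simpl; auto.
  unfold flat_layer in *; simpl. rewrite length_app. unfold flat_unit at 1. rewrite length_app.
  rewrite H by (left; auto). rewrite IH by (intros; apply H; right; auto). simpl. lia. Qed.

Definition u0 : unit_t := ([], 0).

Lemma layer_form ly1 ly2 n j i al be :
  (forall k, In k ly1 -> length (fst k) = n) -> (forall k, In k ly2 -> length (fst k) = n) ->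
  length ly1 = length ly2 -> (j < length ly1)%nat -> in3 al -> in3 be ->
  exists u, vec3 (length (flat_layer ly1)) u /\
    dot u (flat_layer ly1) = al * nth i (fst (nth j ly1 u0)) 0 + be * snd (nth j ly1 u0) /\
    dot u (flat_layer ly2) = al * nth i (fst (nth j ly2 u0)) 0 + be * snd (nth j ly2 u0).
Proof.
  revert ly2 j; induction ly1 as [|k1 ly1 IH]; intros [|k2 ly2] j H1 H2 Hl Hj Ha Hb; simpl in *; try lia.
  assert (L1 : length (fst k1) = n) by auto. assert (L2 : length (fst k2) = n) by auto.
  unfold flat_layer; simpl. fold (flat_layer ly1) (flat_layer ly2).
  destruct j as [|j].
  - destruct (unit_form (fst k1) (fst k2) (snd k1) (snd k2) i al be ltac:(lia) Ha Hb) as [u [Hu [E1 E2]]].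
    exists (u ++ repeat 0 (length (flat_layer ly1))).
    split. { unfold flat_unit. rewrite !length_app. simpl. replace (length (fst k1) + 1)%nat with (S (length (fst k1))) by lia.
             apply vec3_app; auto. apply vec3_repeat. }
    unfold flat_unit. destruct Hu as [Hu _].
    rewrite !dot_app by (rewrite length_app; simpl; lia). rewrite !dot_repeat0.
    rewrite E1, E2. split; ring.
  - destruct (IH ly2 j ltac:(auto) ltac:(auto) ltac:(lia) ltac:(lia) Ha Hb) as [u [Hu [E1 E2]]].
    exists (repeat 0 (length (flat_unit k1)) ++ u).
    split. { rewrite length_app. apply vec3_app; auto. apply vec3_repeat. }
    rewrite !dot_app by (rewrite repeat_length; unfold flat_unit; rewrite !length_app; simpl; lia).
    rewrite !dot_repeat0. rewrite E1, E2. split; ring.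
Qed.

Lemma max_ge A B K : 0 <= Rmax A B + K <-> 0 <= A + K \/ 0 <= B + K.
Proof. unfold Rmax; destruct Rle_dec; split; intros; try destruct H; try lra; auto. Qed.
Lemma max_le A B K : 0 <= - Rmax A B + K <-> 0 <= - A + K /\ 0 <= - B + K.
Proof. unfold Rmax; destruct Rle_dec; split; intros; try destruct H; try split; try lra. Qed.
Lemma abs_ge z K : 0 <= Rabs z + K <-> 0 <= z + K \/ 0 <= - z + K.
Proof. unfold Rabs; destruct Rcase_abs; split; intros; try destruct H; try lra; auto. Qed.
Lemma abs_le z K : 0 <= - Rabs z + K <-> 0 <= - z + K /\ 0 <= z + K.
Proof. unfold Rabs; destruct Rcase_abs; split; intros; try destruct H; try split; try lra. Qed.

Lemma linf_ge y w K : length y = length w ->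
  (0 <= linf y w + K <-> 0 <= K \/ exists i, (i < length y)%nat /\
      (0 <= (nth i y 0 - nth i w 0) + K \/ 0 <= - (nth i y 0 - nth i w 0) + K)).
Proof.
  revert w; induction y as [|a y IH]; intros [|c w] Hl; simpl in *; try lia.
  - split; intros H; [left; lra|destruct H as [H|[i [Hi _]]]; [lra|lia]].
  - rewrite max_ge, abs_ge, IH by lia. split.
    + intros [[H|H]|[H|[i [Hi H]]]]; [right; exists 0%nat; split; [lia|auto]..|left; auto|].
      right; exists (S i); split; [lia|auto].
    + intros [H|[[|i] [Hi H]]]; auto. right; right; exists i; split; [lia|auto].
Qed.

Lemma linf_le y w K : length y = length w ->
  (0 <= - linf y w + K <-> 0 <= K /\ forall i, (i < length y)%nat ->
      0 <= - (nth i y 0 - nth i w 0) + K /\ 0 <= (nth i y 0 - nth i w 0) + K).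
Proof.
  revert w; induction y as [|a y IH]; intros [|c w] Hl; simpl in *; try lia.
  - split; intros H; [split; [lra|intros; lia]|lra].
  - rewrite max_le, abs_le, IH by lia. split.
    + intros [[H1 H2] [H3 H4]]. split; auto. intros [|i] Hi; auto. apply H4; lia.
    + intros [H1 H2]. split; [apply (H2 0%nat); lia|]. split; auto. intros i Hi. apply (H2 (S i)); lia.
Qed.

Lemma iff_conv X1 X2 Y1 Y2 : (0 <= X1 <-> 0 <= X2) -> X1 = Y1 -> X2 = Y2 -> (0 <= Y1 <-> 0 <= Y2).
Proof. intros H <- <-; auto. Qed.

Lemma iff_use X1 X2 Y1 Y2 : (0 <= X1 <-> 0 <= X2) -> 0 <= Y1 -> X1 = Y1 -> X2 = Y2 -> 0 <= Y2.
Proof. intros H Y <- <-; apply H; auto. Qed.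

Lemma netC : forall N1 N2 n y1 y2, dims_ok n N1 -> dims_ok n N2 ->
  map (@length unit_t) N1 = map (@length unit_t) N2 -> length y1 = n -> length y2 = n ->
  (forall t j u, in3 t -> (j <= n)%nat -> vec3 (length (flat_net N1)) u ->
     (0 <= t * nth j y1 0 + dot u (flat_net N1) <-> 0 <= t * nth j y2 0 + dot u (flat_net N2))) ->
  (0 <= net_out N1 y1 <-> 0 <= net_out N2 y2).
Proof.
  induction N1 as [|ly1 N1 IH]; intros [|ly2 N2] n y1 y2 D1 D2 Hm L1 L2 Hh; simpl in Hm; try discriminate.
  - simpl in D1. subst n. unfold net_out; simpl.
    specialize (Hh 1 0%nat [] ltac:(right; right; auto) ltac:(lia) ltac:(split; [reflexivity|constructor])).
    simpl in Hh. destruct y1 as [|a1 y1'], y2 as [|a2 y2']; simpl in *; try lia. lra.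
  - injection Hm as Hlen Hm. destruct D1 as [W1 D1]. destruct D2 as [W2 D2].
    unfold net_out; simpl. fold (net_out N1 (eval_layer ly1 y1)) (net_out N2 (eval_layer ly2 y2)).
    assert (F1 : flat_net (ly1 :: N1) = flat_layer ly1 ++ flat_net N1) by reflexivity.
    assert (F2 : flat_net (ly2 :: N2) = flat_layer ly2 ++ flat_net N2) by reflexivity.
    rewrite F1, F2 in Hh.
    assert (LL1 : length (flat_layer ly1) = (length ly1 * S n)%nat) by (apply flat_layer_len; auto).
    assert (LL2 : length (flat_layer ly2) = (length ly2 * S n)%nat) by (apply flat_layer_len; auto).
    assert (H0 : forall u', vec3 (length (flat_net N1)) u' -> (0 <= dot u' (flat_net N1) <-> 0 <= dot u' (flat_net N2))).
    { intros u' Hu'. specialize (Hh 0 0%nat (repeat 0 (length (flat_layer ly1)) ++ u') ltac:(right; left; auto) ltac:(lia)).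
      rewrite length_app in Hh. specialize (Hh (vec3_app _ _ _ _ (vec3_repeat _) Hu')).
      rewrite !dot_app in Hh by (rewrite repeat_length; lia). rewrite !dot_repeat0 in Hh.
      apply (iff_conv _ _ _ _ Hh); ring. }
    assert (HH : forall t i al be j u', in3 t -> (i <= n)%nat -> in3 al -> in3 be -> (j < length ly1)%nat ->
        vec3 (length (flat_net N1)) u' ->
        (0 <= t * nth i y1 0 + (al * nth i (fst (nth j ly1 u0)) 0 + be * snd (nth j ly1 u0)) + dot u' (flat_net N1)
         <-> 0 <= t * nth i y2 0 + (al * nth i (fst (nth j ly2 u0)) 0 + be * snd (nth j ly2 u0)) + dot u' (flat_net N2))).
    { intros t i al be j u' Ht Hi Ha Hb Hj Hu'.
      destruct (layer_form ly1 ly2 n j i al be W1 W2 Hlen Hj Ha Hb) as [u [Hu [E1 E2]]].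
      specialize (Hh t i (u ++ u') Ht Hi). rewrite length_app in Hh. specialize (Hh (vec3_app _ _ _ _ Hu Hu')).
      destruct Hu as [Hu _].
      rewrite !dot_app in Hh by lia. rewrite E1, E2 in Hh.
      apply (iff_conv _ _ _ _ Hh); (lazymatch goal with |- ?a + (?b + ?c) = _ => transitivity (a + b + c); [symmetry; apply Rplus_assoc | reflexivity] end). }
    apply (IH N2 (length ly1)); auto.
    + rewrite Hlen; auto.
    + unfold eval_layer; rewrite length_map; auto.
    + unfold eval_layer; rewrite length_map; auto.
    + intros t j u' Ht Hj Hu'.
      destruct (Nat.eq_dec j (length ly1)) as [Ej|Ej].
      { rewrite !nth_overflow by (unfold eval_layer; rewrite length_map; lia).
        apply (iff_conv _ _ _ _ (H0 u' Hu')); ring. }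
      assert (Hj' : (j < length ly1)%nat) by lia.
      unfold eval_layer.
      rewrite (nth_indep _ 0 (eval_unit u0 y1)) by (rewrite length_map; lia).
      rewrite (nth_indep _ 0 (eval_unit u0 y2)) by (rewrite length_map; lia).
      rewrite (map_nth (fun u => eval_unit u y1)), (map_nth (fun u => eval_unit u y2)). unfold eval_unit.
      assert (Lw1 : length y1 = length (fst (nth j ly1 u0))) by (rewrite W1; auto; apply nth_In; lia).
      assert (Lw2 : length y2 = length (fst (nth j ly2 u0))) by (rewrite W2; auto; apply nth_In; lia).
      set (w1 := fst (nth j ly1 u0)) in *. set (w2 := fst (nth j ly2 u0)) in *.
      set (b1 := snd (nth j ly1 u0)) in *. set (b2 := snd (nth j ly2 u0)) in *.
      set (D1' := dot u' (flat_net N1)). set (D2' := dot u' (flat_net N2)).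
      assert (m1 : in3 (-1)) by (left; auto). assert (z0 : in3 0) by (right; left; auto).
      assert (p1 : in3 1) by (right; right; auto).
      assert (A : forall be, in3 be -> (0 <= be * b1 + D1' <-> 0 <= be * b2 + D2')).
      { intros be Hb. pose proof (HH 0 0%nat 0 be j u' z0 ltac:(lia) z0 Hb Hj' Hu') as K.
        apply (iff_conv _ _ _ _ K); unfold D1', D2', b1, b2; ring. }
      assert (B : forall tt al be i, in3 tt -> in3 al -> in3 be -> (i < n)%nat ->
                (0 <= tt * nth i y1 0 + al * nth i w1 0 + be * b1 + D1' <->
                 0 <= tt * nth i y2 0 + al * nth i w2 0 + be * b2 + D2')).
      { intros tt al be i Htt Ha Hb Hi. pose proof (HH tt i al be j u' Htt ltac:(lia) Ha Hb Hj' Hu') as K.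
        apply (iff_conv _ _ _ _ K); unfold D1', D2', b1, b2, w1, w2; ring. }
      destruct Ht as [Ht|[Ht|Ht]]; subst t.
      * apply (iff_conv (- linf y1 w1 + (- b1 + D1')) (- linf y2 w2 + (- b2 + D2'))); [|ring|ring].
        rewrite (linf_le y1), (linf_le y2) by auto. rewrite L1, L2.
        pose proof (A (-1) m1) as A'. split; intros [X Y]; split.
        -- apply (iff_use _ _ _ _ A' X); ring.
        -- intros i Hi. specialize (Y i Hi). destruct Y as [Y1 Y2].
           pose proof (B (-1) 1 (-1) i m1 p1 m1 Hi) as B1. pose proof (B 1 (-1) (-1) i p1 m1 m1 Hi) as B2.
           split; [apply (iff_use _ _ _ _ B1 Y1)|apply (iff_use _ _ _ _ B2 Y2)]; ring.
        -- apply (iff_use _ _ _ _ (iff_sym A') X); ring.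
        -- intros i Hi. specialize (Y i Hi). destruct Y as [Y1 Y2].
           pose proof (B (-1) 1 (-1) i m1 p1 m1 Hi) as B1. pose proof (B 1 (-1) (-1) i p1 m1 m1 Hi) as B2.
           split; [apply (iff_use _ _ _ _ (iff_sym B1) Y1)|apply (iff_use _ _ _ _ (iff_sym B2) Y2)]; ring.
      * apply (iff_conv _ _ _ _ (H0 u' Hu')); unfold D1', D2'; ring.
      * apply (iff_conv (linf y1 w1 + (b1 + D1')) (linf y2 w2 + (b2 + D2'))); [|ring|ring].
        rewrite (linf_ge y1), (linf_ge y2) by auto. rewrite L1, L2.
        pose proof (A 1 p1) as A'. split; (intros [X|[i [Hi [Y|Y]]]]; [left|right; exists i; split; [auto|left]|right; exists i; split; [auto|right]]).
        -- apply (iff_use _ _ _ _ A' X); ring.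
        -- pose proof (B 1 (-1) 1 i p1 m1 p1 Hi) as B1. apply (iff_use _ _ _ _ B1 Y); ring.
        -- pose proof (B (-1) 1 1 i m1 p1 p1 Hi) as B1. apply (iff_use _ _ _ _ B1 Y); ring.
        -- apply (iff_use _ _ _ _ (iff_sym A') X); ring.
        -- pose proof (B 1 (-1) 1 i p1 m1 p1 Hi) as B1. apply (iff_use _ _ _ _ (iff_sym B1) Y); ring.
        -- pose proof (B (-1) 1 1 i m1 p1 p1 Hi) as B1. apply (iff_use _ _ _ _ (iff_sym B1) Y); ring.
Qed.

Fixpoint all3 (P : nat) : list (list R) :=
  match P with O => [[]] | S P => flat_map (fun a => map (cons a) (all3 P)) [-1; 0; 1] end.

Lemma all3_in P u : vec3 P u -> In u (all3 P).
Proof.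
  revert u; induction P as [|P IH]; intros [|a u] [Hl Hf]; simpl in Hl; try lia; simpl; auto.
  inversion Hf; subst. apply in_app_iff.
  destruct H1 as [E|[E|E]]; subst.
  - left. apply in_map. apply IH; split; auto; lia.
  - right; apply in_app_iff; left. apply in_map. apply IH; split; auto; lia.
  - right; apply in_app_iff; right; apply in_app_iff; left. apply in_map. apply IH; split; auto; lia.
Qed.

Lemma all3_len_in P u : In u (all3 P) -> length u = P.
Proof.
  revert u; induction P as [|P IH]; intros u Hu; simpl in Hu.
  - destruct Hu as [<-|[]]; auto.
  - rewrite !in_app_iff in Hu. destruct Hu as [Hu|[Hu|[Hu|[]]]]; apply in_map_iff in Hu as [v [<- Hv]]; simpl; f_equal; auto.
Qed.

Lemma all3_length P : length (all3 P) = (3 ^ P)%nat.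
Proof. induction P; simpl; auto. rewrite !length_app, !length_map, IHP. simpl. lia. Qed.

Lemma length_flat_map_const {A B} (f : A -> list B) l k : (forall x, length (f x) = k) ->
  length (flat_map f l) = (length l * k)%nat.
Proof. intros H; induction l; simpl; auto. rewrite length_app, H, IHl; lia. Qed.

Definition fam (pts : list (list R)) (d P : nat) : list aff :=
  flat_map (fun x => flat_map (fun t => flat_map (fun j => map (fun u => (u, t * nth j x 0)) (all3 P))
     (seq 0 (S d))) [-1; 0; 1]) pts.

Lemma fam_length pts d P : length (fam pts d P) = (length pts * (3 * (S d * 3 ^ P)))%nat.
Proof.
  unfold fam. rewrite (length_flat_map_const _ _ (3 * (S d * 3 ^ P))); auto.
  intros x. rewrite (length_flat_map_const _ _ (S d * 3 ^ P)); auto.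
  intros t. rewrite (length_flat_map_const _ _ (3 ^ P)); [rewrite length_seq; auto|].
  intros j. rewrite length_map, all3_length; auto.
Qed.

Lemma fam_dims pts d P : Forall (fun f => length (fst f) = P) (fam pts d P).
Proof.
  apply Forall_forall. intros f Hf. unfold fam in Hf.
  apply in_flat_map in Hf as [x [_ Hf]]. apply in_flat_map in Hf as [t [_ Hf]].
  apply in_flat_map in Hf as [j [_ Hf]]. apply in_map_iff in Hf as [u [<- Hu]].
  apply all3_len_in; auto.
Qed.

Lemma fam_in pts d P x t j u : In x pts -> In t [-1; 0; 1] -> (j <= d)%nat -> vec3 P u ->
  In (u, t * nth j x 0) (fam pts d P).
Proof.
  intros Hx Ht Hj Hu. unfold fam. apply in_flat_map. exists x; split; auto.
  apply in_flat_map. exists t; split; auto. apply in_flat_map. exists j; split.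
  - apply in_seq; lia.
  - apply in_map_iff. exists u; split; [reflexivity|apply all3_in; auto].
Qed.

Lemma pat_eq_in fs th1 th2 f : pat fs th1 = pat fs th2 -> In f fs ->
  (0 <= aeval f th1 <-> 0 <= aeval f th2).
Proof.
  induction fs as [|h fs IH]; intros E Hf; simpl in *; [contradiction|].
  injection E as E1 E2. destruct Hf as [<-|Hf]; auto.
  unfold sgn in E1. destruct (Rle_dec 0 (aeval h th1)), (Rle_dec 0 (aeval h th2)); try discriminate; tauto.
Qed.

Fixpoint plen (n : nat) (sh : list nat) : nat :=
  match sh with [] => O | k :: sh => (k * S n + plen k sh)%nat end.

Lemma flat_net_len N n : dims_ok n N -> length (flat_net N) = plen n (map (@length unit_t) N).
Proof.
  revert n; induction N as [|ly N IH]; intros n D; simpl; auto.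
  destruct D as [W D]. change (flat_net (ly :: N)) with (flat_layer ly ++ flat_net N).
  rewrite length_app, (flat_layer_len ly n W), (IH _ D). auto.
Qed.

Lemma plen_bound n w sh : (n <= w)%nat -> Forall (fun k => (k <= w)%nat) sh ->
  (plen n sh <= length sh * (w * S w))%nat.
Proof.
  revert n; induction sh as [|k sh IH]; intros n Hn Hf; simpl; [lia|].
  inversion Hf; subst. specialize (IH k H1 H2). nia.
Qed.

Fixpoint alls (n w : nat) : list (list nat) :=
  match n with O => [[]] | S n => flat_map (fun k => map (cons k) (alls n w)) (seq 0 (S w)) end.

Lemma alls_in n w sh : length sh = n -> Forall (fun k => (k <= w)%nat) sh -> In sh (alls n w).
Proof.
  revert sh; induction n as [|n IH]; intros [|k sh] Hl Hf; simpl in Hl; try lia; [simpl; auto|].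
  inversion Hf; subst. change (alls (S n) w) with (flat_map (fun k => map (cons k) (alls n w)) (seq 0 (S w))).
  apply in_flat_map. exists k; split; [apply in_seq; lia|]. apply in_map, IH; auto.
Qed.

Lemma alls_prop n w sh : In sh (alls n w) -> length sh = n /\ Forall (fun k => (k <= w)%nat) sh.
Proof.
  revert sh; induction n as [|n IH]; intros sh H.
  - simpl in H. destruct H as [<-|[]]; auto.
  - change (alls (S n) w) with (flat_map (fun k => map (cons k) (alls n w)) (seq 0 (S w))) in H.
    apply in_flat_map in H as [k [Hk H]]. apply in_map_iff in H as [s [<- Hs]].
    apply in_seq in Hk. destruct (IH s Hs). simpl; split; [lia|constructor; auto; lia].
Qed.

Lemma alls_length n w : length (alls n w) = (S w ^ n)%nat.
Proof. induction n; [simpl; auto|].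
  change (alls (S n) w) with (flat_map (fun k => map (cons k) (alls n w)) (seq 0 (S w))).
  rewrite (length_flat_map_const _ _ (S w ^ n)).
  - rewrite length_seq; simpl; lia.
  - intros; rewrite length_map; auto. Qed.

Fixpoint allb (n : nat) : list (list bool) :=
  match n with O => [[]] | S n => map (cons true) (allb n) ++ map (cons false) (allb n) end.

Lemma allb_length n : length (allb n) = (2 ^ n)%nat.
Proof. induction n; simpl; auto. rewrite length_app, !length_map, IHn; lia. Qed.

Lemma allb_in n b : In b (allb n) -> length b = n.
Proof. revert b; induction n; intros b H; simpl in H.
  - destruct H as [<-|[]]; auto.
  - apply in_app_iff in H as [H|H]; apply in_map_iff in H as [c [<- Hc]]; simpl; auto. Qed.

Lemma allb_nodup n : NoDup (allb n).
Proof. induction n; simpl. constructor; auto; constructor.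
  apply NoDup_app.
  - apply NoDup_map_NoDup_ForallPairs; auto. intros x y _ _ E; injection E; auto.
  - apply NoDup_map_NoDup_ForallPairs; auto. intros x y _ _ E; injection E; auto.
  - intros a H1 H2. apply in_map_iff in H1 as [c [<- _]]. apply in_map_iff in H2 as [e [E _]]. discriminate.
Qed.

Fixpoint idx (x : list R) (l : list (list R)) : nat :=
  match l with [] => O | y :: l => if list_eq_dec Req_EM_T x y then O else S (idx x l) end.

Lemma idx_nth l i : NoDup l -> (i < length l)%nat -> idx (nth i l []) l = i.
Proof.
  revert i; induction l as [|y l IH]; intros i Hn Hi; simpl in *; [lia|].
  inversion Hn; subst. destruct i as [|i].
  - destruct list_eq_dec; congruence.
  - destruct list_eq_dec as [E|E].
    + exfalso. apply H1. rewrite <- E. apply nth_In; lia.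
    + f_equal. apply IH; auto; lia.
Qed.

Fixpoint g_le h p : (g h p <= (h + 1) ^ p)%nat.
Proof.
  destruct h as [|h]; destruct p as [|p]; simpl; try lia.
  - rewrite Nat.pow_1_l. lia.
  - pose proof (g_le h (S p)). pose proof (g_le h p). simpl in *.
    assert ((h + 1) ^ p <= (S (h + 1)) ^ p)%nat by (apply Nat.pow_le_mono_l; lia). nia.
Qed.

Definition cntk {A K} (dec : forall a b : K, {a = b} + {a <> b}) (f : A -> K) (l : list A) (keys : list K) : nat :=
  fold_right (fun k acc => (length (filter (fun a => if dec (f a) k then true else false) l) + acc)%nat) O keys.

Lemma cntk_cons {A K} dec (f : A -> K) a l keys :
  cntk dec f (a :: l) keys = (count_occ dec keys (f a) + cntk dec f l keys)%nat.
Proof.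
  induction keys as [|k keys IH]; simpl; auto. rewrite IH.
  destruct (dec (f a) k) as [E|E]; simpl; destruct (dec k (f a)); try congruence; lia.
Qed.

Lemma cntk_ge {A K} dec (f : A -> K) l keys : (forall a, In a l -> In (f a) keys) ->
  (length l <= cntk dec f l keys)%nat.
Proof.
  induction l as [|a l IH]; intros H; simpl; [lia|]. rewrite cntk_cons.
  assert (count_occ dec keys (f a) > 0)%nat by (apply count_occ_In; apply H; left; auto).
  specialize (IH (fun b Hb => H b (or_intror Hb))). lia.
Qed.

Lemma cntk_le {A K} (dec : forall a b : K, {a = b} + {a <> b}) (f : A -> K) l keys G :
  (forall k, In k keys -> (length (filter (fun a => if dec (f a) k then true else false) l) <= G)%nat) ->
  (cntk dec f l keys <= length keys * G)%nat.
Proof.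
  induction keys as [|k keys IH]; intros H; simpl; [lia|].
  assert (H1 := H k (or_introl eq_refl)). assert (IH2 : (cntk dec f l keys <= length keys * G)%nat) by (apply IH; intros; apply H; right; auto). simpl in H1. unfold cntk in *; simpl. lia.
Qed.

Lemma nat_bound d w L pts : (d <= w)%nat -> shattered d w L pts ->
  (2 ^ length pts <= S w ^ (S L) * (length pts * (3 * (S d * 3 ^ (S L * (w * S w)))) + 1) ^ (S L * (w * S w)))%nat.
Proof.
  intros Hdw [Hnd [Hlen Hlab]].
  set (m := length pts). set (Q := (S L * (w * S w))%nat).
  set (lab := fun (b : list bool) (x : list R) => nth (idx x pts) b false).
  assert (ch : forall b, {N | arch_ok d w L N /\ forall x, In x pts -> (0 <= net_out N x <-> lab b x = true)})
    by (intro b; apply constructive_indefinite_description; apply Hlab).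
  set (NB := fun b => proj1_sig (ch b)).
  assert (NBp : forall b, arch_ok d w L (NB b) /\ forall x, In x pts -> (0 <= net_out (NB b) x <-> lab b x = true))
    by (intro b; exact (proj2_sig (ch b))).
  set (shp := fun b => map (@length unit_t) (NB b)).
  set (dec := list_eq_dec Nat.eq_dec).
  rewrite <- (allb_length m).
  eapply Nat.le_trans; [apply (cntk_ge dec shp (allb m) (alls (S L) w))|].
  { intros b _. destruct (NBp b) as [[D [Ll Fw]] _]. apply alls_in.
    - unfold shp; rewrite length_map; auto.
    - unfold shp. apply Forall_map. auto. }
  rewrite <- (alls_length (S L) w). apply cntk_le. intros sh Hsh.
  destruct (alls_prop _ _ _ Hsh) as [Lsh Fsh].
  set (Bs := filter (fun a => if dec (shp a) sh then true else false) (allb m)).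
  set (P := plen d sh).
  assert (HP : (P <= Q)%nat) by (unfold P, Q; rewrite <- Lsh; apply plen_bound; auto).
  set (fs := fam pts d P).
  assert (HBs : forall b, In b Bs -> In b (allb m) /\ shp b = sh).
  { intros b Hb. apply filter_In in Hb as [Hb Hs]. destruct dec in Hs; [auto|discriminate]. }
  assert (HfP : forall b, In b Bs -> length (flat_net (NB b)) = P).
  { intros b Hb. destruct (HBs b Hb) as [_ Hs]. destruct (NBp b) as [[D _] _].
    rewrite (flat_net_len _ d D). fold (shp b). rewrite Hs. reflexivity. }
  set (pats := map (fun b => pat fs (flat_net (NB b))) Bs).
  replace (length Bs) with (length pats) by (unfold pats; apply length_map).
  eapply Nat.le_trans; [apply (count (length fs) fs P pats eq_refl (fam_dims pts d P))|].
  - unfold pats. apply NoDup_map_NoDup_ForallPairs; [|apply NoDup_filter, allb_nodup].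
    intros b1 b2 Hb1 Hb2 E.
    destruct (HBs b1 Hb1) as [A1 S1]. destruct (HBs b2 Hb2) as [A2 S2].
    apply allb_in in A1. apply allb_in in A2.
    destruct (NBp b1) as [[D1 _] O1]. destruct (NBp b2) as [[D2 _] O2].
    apply nth_ext with false false; [congruence|]. intros i Hi.
    set (x := nth i pts []).
    assert (Hx : In x pts) by (apply nth_In; lia).
    assert (Lx : length x = d) by (rewrite Forall_forall in Hlen; auto).
    assert (K : 0 <= net_out (NB b1) x <-> 0 <= net_out (NB b2) x).
    { apply (netC _ _ d x x D1 D2); auto.
      - fold (shp b1) (shp b2). congruence.
      - intros t j u Ht Hj Hu.
        assert (Hu' : vec3 P u) by (rewrite <- (HfP b1 Hb1); auto).
        assert (Ht' : In t [-1; 0; 1]) by (destruct Ht as [E0|[E0|E0]]; rewrite E0; simpl; auto).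
        pose proof (pat_eq_in fs _ _ (u, t * nth j x 0) E (fam_in pts d P x t j u Hx Ht' Hj Hu')) as K.
        unfold aeval in K; simpl in K. rewrite !(Rplus_comm (t * nth j x 0)). exact K. }
    specialize (O1 x Hx). specialize (O2 x Hx). unfold lab in O1, O2.
    assert (Ix : idx x pts = i) by (apply idx_nth; auto; lia). rewrite Ix in O1, O2.
    destruct (nth i b1 false), (nth i b2 false); auto; exfalso; assert (Fb : false <> true) by discriminate; tauto.
  - intros s Hs. unfold pats in Hs. apply in_map_iff in Hs as [b [<- Hb]].
    exists (flat_net (NB b)). split; auto.
  - eapply Nat.le_trans; [apply g_le|].
    unfold fs; rewrite fam_length. fold m.
    assert (H3 : (3 ^ P <= 3 ^ Q)%nat) by (apply Nat.pow_le_mono_r; lia).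
    apply Nat.le_trans with ((m * (3 * (S d * 3 ^ Q)) + 1) ^ P)%nat.
    + apply Nat.pow_le_mono_l. apply Nat.add_le_mono_r. apply Nat.mul_le_mono_l, Nat.mul_le_mono_l, Nat.mul_le_mono_l; auto.
    + apply Nat.pow_le_mono_r; lia.
Qed.

Lemma nat_simpl m d w L : (d <= w)%nat ->
  (2 ^ m <= S w ^ (S L) * (m * (3 * (S d * 3 ^ (S L * (w * S w)))) + 1) ^ (S L * (w * S w)))%nat ->
  (2 ^ m <= (m + 1) ^ (S L * (w * S w)) * 2 ^ (3 * (S L * (w * S w)) * (S L * (w * S w)) + 3 * (S L * (w * S w))))%nat.
Proof.
  intros Hdw H. set (Q := (S L * (w * S w))%nat) in *. set (X := (2 ^ Q)%nat).
  assert (Hw : (S w <= 2 ^ w)%nat) by (apply Nat.pow_gt_lin_r; lia).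
  assert (HwQ : (w <= Q)%nat) by (unfold Q; nia).
  assert (HwLQ : (w * S L <= Q)%nat) by (unfold Q; nia).
  assert (Hw2 : (2 ^ w <= X)%nat) by (apply Nat.pow_le_mono_r; lia).
  assert (h1 : (S w ^ S L <= X)%nat).
  { apply Nat.le_trans with ((2 ^ w) ^ S L)%nat; [apply Nat.pow_le_mono_l; auto|].
    rewrite <- Nat.pow_mul_r. apply Nat.pow_le_mono_r; lia. }
  assert (h2 : (S d <= X)%nat) by lia.
  assert (h3 : (3 ^ Q <= X * X)%nat).
  { apply Nat.le_trans with (4 ^ Q)%nat; [apply Nat.pow_le_mono_l; lia|].
    unfold X. rewrite <- Nat.pow_mul_l. apply Nat.pow_le_mono_l; lia. }
  assert (h4 : (S d * 3 ^ Q <= X * (X * X))%nat) by (apply Nat.mul_le_mono; auto).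
  assert (HX : (1 <= X)%nat) by (unfold X; apply Nat.neq_0_lt_0 ; apply Nat.pow_nonzero; lia).
  assert (h5 : (m * (3 * (S d * 3 ^ Q)) + 1 <= (m + 1) * (4 * X * X * X))%nat) by nia.
  assert (h6 : (4 * X * X * X = 2 ^ (3 * Q + 2))%nat).
  { unfold X. replace (3 * Q + 2)%nat with (Q + (Q + (Q + 2)))%nat by lia. rewrite !Nat.pow_add_r. change (2 ^ 2)%nat with 4%nat. ring. }
  assert (h7 : ((m * (3 * (S d * 3 ^ Q)) + 1) ^ Q <= (m + 1) ^ Q * 2 ^ ((3 * Q + 2) * Q))%nat).
  { rewrite Nat.pow_mul_r, <- h6, <- Nat.pow_mul_l. apply Nat.pow_le_mono_l; auto. }
  eapply Nat.le_trans; [exact H|].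
  replace (3 * Q * Q + 3 * Q)%nat with (Q + (3 * Q + 2) * Q)%nat by ring.
  rewrite Nat.pow_add_r. fold X. nia.
Qed.
Lemma ln_le' a b : 0 < a -> a <= b -> ln a <= ln b.
Proof. intros Ha Hab. destruct (Rle_lt_or_eq_dec _ _ Hab) as [H|H]; [apply Rlt_le, ln_increasing; auto|subst; lra]. Qed.

Lemma ln_le_sub1 y : 0 < y -> ln y <= y - 1.
Proof. intros Hy. pose proof (exp_ineq1_le (ln y)). rewrite exp_ln in H by auto. lra. Qed.

Lemma real_final (m Q : nat) : (1 <= Q)%nat -> (2 ^ m <= (m + 1) ^ Q * 2 ^ (3 * Q * Q + 3 * Q))%nat ->
  INR m <= 44 * INR Q ^ 2.
Proof.
  intros HQ H. apply le_INR in H. rewrite mult_INR, !pow_INR, plus_INR in H. replace (INR 2) with 2 in H by (simpl; ring).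
  replace (INR 1) with 1 in H by reflexivity.
  set (M := INR m) in *. set (q := INR Q) in *.
  assert (Hq : 1 <= q) by (unfold q; apply (le_INR 1); auto).
  assert (HM : 0 <= M) by (apply pos_INR).
  assert (Hl1 : / 2 < ln 2) by apply ln_lt_2.
  assert (Hl2 : ln 2 < 1).
  { rewrite <- (ln_exp 1). apply ln_increasing; [lra|]. pose proof (exp_ineq1 1 ltac:(lra)). lra. }
  apply ln_le' in H; [|apply pow_lt; lra].
  rewrite ln_mult in H by (apply pow_lt; lra).
  rewrite !ln_pow in H by lra.
  rewrite plus_INR, !mult_INR in H. replace (INR 3) with 3 in H by (simpl; ring). fold q M in H.
  assert (Hln : q * ln (M + 1) <= 4 * q ^ 2 + (M + 1) / 4).
  { replace (M + 1) with ((4 * q) * ((M + 1) / (4 * q))) by (field; lra).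
    rewrite ln_mult by (try apply Rdiv_lt_0_compat; lra).
    pose proof (ln_le_sub1 (4 * q) ltac:(lra)).
    pose proof (ln_le_sub1 ((M + 1) / (4 * q)) ltac:(apply Rdiv_lt_0_compat; lra)).
    assert (q * ((M + 1) / (4 * q)) = (M + 1) / 4) by (field; lra).
    nra. }
  assert (E1 : M * (ln 2 - /2) >= 0) by nra.
  assert (E2 : (3 * q * q + 3 * q) * (1 - ln 2) >= 0) by nra.
  assert (q <= q * q) by nra. replace (q ^ 2) with (q * q) in * by ring.
  replace (3 * q * q) with (3 * (q * q)) in * by ring.
  set (A := q * ln (M + 1)) in *. set (l := ln 2) in *. set (qq := q * q) in *.
  assert (E3 : M * l = M * (l - /2) + M / 2) by field.
  assert (E4 : (3 * qq + 3 * q) * l = (3 * qq + 3 * q) - (3 * qq + 3 * q) * (1 - l)) by ring.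

  lra.
Qed.

Theorem lemma7 :
  exists (C : R) (k : nat), 0 < C /\
    forall (d w L : nat) (pts : list (list R)),
      (1 <= d)%nat -> (d <= w)%nat -> (1 <= L)%nat ->
      shattered d w L pts ->
      INR (length pts) <=
        C * INR L ^ 2 * INR w ^ 4 * (ln (INR (L * w) + 2)) ^ k.
Proof.
  exists 1000, 0%nat. split; [lra|].
  intros d w L pts Hd Hdw HL Hs.
  assert (HQ : (1 <= S L * (w * S w))%nat) by nia.
  pose proof (real_final _ _ HQ (nat_simpl _ _ _ _ Hdw (nat_bound d w L pts Hdw Hs))) as H.
  rewrite !mult_INR, !S_INR in H. simpl (_ ^ 0). rewrite Rmult_1_r.
  assert (Hl : 1 <= INR L) by (apply (le_INR 1); auto).
  assert (Hw : 1 <= INR w) by (apply (le_INR 1); lia).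
  set (l := INR L) in *. set (x := INR w) in *.
  assert (H1 : (l + 1) * (x * (x + 1)) <= 4 * l * (x * x)).
  { replace (4 * l * (x * x)) with ((2 * l) * (x * (2 * x))) by ring.
    apply Rmult_le_compat; try nra. }
  assert (H2 : 0 <= (l + 1) * (x * (x + 1))) by nra.
  assert (H3 : ((l + 1) * (x * (x + 1))) ^ 2 <= (4 * l * (x * x)) ^ 2) by (apply pow_incr; auto).
  assert (H4 : (4 * l * (x * x)) ^ 2 = 16 * (l ^ 2 * x ^ 4)) by ring.
  assert (H5 : 0 <= l ^ 2 * x ^ 4) by (apply Rmult_le_pos; apply pow_le; lra).
  replace (1000 * l ^ 2 * x ^ 4) with (1000 * (l ^ 2 * x ^ 4)) by ring.
  lra.
Qed.
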